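(* Let $W\subset\mathbb R^m$ be a linear subspace, $\mathcal W\subset[m]$ a sample of the determinantal measure $\mathbb P^W$, $u\in[m]$, $k\ge1$ an integer and $\gamma\in(0,1/k)$. Suppose $\xi_1,\dots,\xi_k\in W$ satisfy (i) $|\xi_i(u)|=1$ for all $i\in[k]$, and (ii) $|\langle\xi_i,\xi_j\rangle|\le\gamma\min(\|\xi_i\|^2,\|\xi_j\|^2)$ for all $i\ne j$ in $[k]$. Then \[\mathbb P^W(u\in\mathcal W)\ge\Big(1-\frac{\gamma k}{1-\gamma k}\Big)\sum_{i=1}^k\frac{1}{\|\xi_i\|^2}.\]
   Context: For a linear subspace $W\subset\mathbb R^m$ with orthogonal projection $P_W$ (an $m\times m$ matrix), the determinantal measure $\mathbb P^W$ is the probability measure on subsets $\mathcal S\subset[m]$ of size $\dim W$ given by $\mathbb P^W(\mathcal S)=\det(P_W|_{\mathcal S})$, where $P_W|_{\mathcal S}$ is the principal submatrix indexed by $\mathcal S$. *)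

(* Defs.v *)
(* Vectors of R^m are row vectors 'rV[R]_m; a linear
   subspace W of R^m is represented (mxalgebra style) by the row space of a
   matrix W : 'M[R]_m. *)
From HB Require Import structures.
From mathcomp Require Import all_boot all_order all_algebra.
Set Implicit Arguments. Unset Strict Implicit. Unset Printing Implicit Defensive.
Import Order.TTheory GRing.Theory Num.Theory.
Local Open Scope ring_scope.

Definition dotv (R : realFieldType) (m : nat) (x y : 'rV[R]_m) : R :=
  \sum_(i < m) x 0 i * y 0 i.
Definition sqnorm (R : realFieldType) (m : nat) (x : 'rV[R]_m) : R := dotv x x.

Definition is_orth_proj (R : realFieldType) (m : nat) (W P : 'M[R]_m) : Prop :=
  [/\ P^T = P, P *m P = P & (P == W)%MS].

Definition principal_submx (R : realFieldType) (m : nat) (P : 'M[R]_m)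
  (S : {set 'I_m}) : 'M[R]_#|S| :=
  \matrix_(i < #|S|, j < #|S|) P (enum_val i) (enum_val j).

Definition detmeasure (R : realFieldType) (m : nat) (W P : 'M[R]_m)
  (S : {set 'I_m}) : R :=
  if #|S| == \rank W then \det (principal_submx P S) else 0.

Definition detprob_mem (R : realFieldType) (m : nat) (W P : 'M[R]_m)
  (u : 'I_m) : R :=
  \sum_(S : {set 'I_m} | u \in S) detmeasure W P S.

(* Main.v *)
Require Import Defs.
From HB Require Import structures.
From mathcomp Require Import all_boot all_order all_algebra all_fingroup.
From mathcomp Require Import ring lra.
Set Implicit Arguments. Unset Strict Implicit. Unset Printing Implicit Defensive.
Import Order.TTheory GRing.Theory Num.Theory.
Local Open Scope ring_scope.

Lemma im_card r m (f : 'I_r -> 'I_m) : injective f -> #|f @: setT| = r.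
Proof. by move=> finj; rewrite card_imset // cardsT card_ord. Qed.

Lemma inj_perm r m (f : 'I_r -> 'I_m) (S : {set 'I_m}) (eqS : #|S| = r) :
  injective f -> f @: setT = S ->
  exists s : 'S_r, forall i, f i = enum_val (cast_ord (esym eqS) (s i)).
Proof.
move=> finj fim.
have Hf i : f i \in S by rewrite -fim; apply: imset_f; rewrite in_setT.
pose g i := cast_ord eqS (enum_rank_in (Hf i) (f i)).
have gK i : enum_val (cast_ord (esym eqS) (g i)) = f i.
  by rewrite /g cast_ordK (enum_rankK_in (Hf i) (Hf i)).
have ginj : injective g by move=> i j H; apply: finj; rewrite -gK H gK.
by exists (perm ginj) => i; rewrite permE gK.
Qed.

Lemma card_inj_im r m (S : {set 'I_m}) : #|S| = r ->
  #|[pred f : {ffun 'I_r -> 'I_m} | injectiveb f && (f @: setT == S)]| = r`!.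
Proof.
move=> eqS.
pose e i := enum_val (cast_ord (esym eqS) i).
have einj : injective e by move=> i j /enum_val_inj /cast_ord_inj.
pose phi (s : 'S_r) := [ffun i => e (s i)].
have phiinj : injective phi.
  move=> s1 s2 /ffunP H; apply/permP => i.
  by have := H i; rewrite !ffunE => /einj.
rewrite -card_Sn -(card_image phiinj); apply: eq_card => f.
rewrite inE; apply/idP/idP.
  case/andP => /injectiveP finj /eqP fim.
  have [s Hs] := inj_perm eqS finj fim.
  by apply/imageP; exists s => //; apply/ffunP => i; rewrite ffunE Hs.
case/imageP => s _ ->.
have pinj : injective (phi s).
  by move=> i j; rewrite !ffunE => /einj /perm_inj.
apply/andP; split; first by apply/injectiveP.
rewrite eqEcard im_card // eqS leqnn andbT.
apply/subsetP => y /imsetP [i _ ->]; rewrite ffunE; exact: enum_valP.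
Qed.

Lemma sum_funs_sets (R : pzRingType) r m (F : {ffun 'I_r -> 'I_m} -> R)
    (G : {set 'I_m} -> R) :
  (forall f : {ffun 'I_r -> 'I_m}, ~~ injectiveb f -> F f = 0) ->
  (forall f : {ffun 'I_r -> 'I_m}, injectiveb f -> F f = G (f @: setT)) ->
  \sum_f F f = (r`!)%:R * \sum_(S : {set 'I_m} | #|S| == r) G S.
Proof.
move=> F0 FG.
transitivity (\sum_(f : {ffun 'I_r -> 'I_m} | injectiveb f) G (f @: setT)).
  rewrite [RHS]big_mkcond /=; apply: eq_bigr => f _.
  by case: ifP => [/FG //|/negbT /F0].
rewrite (partition_big (fun f : {ffun 'I_r -> 'I_m} => f @: setT)
   (fun S : {set 'I_m} => #|S| == r)) /=; last first.
  by move=> f /injectiveP finj; rewrite im_card.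
rewrite big_distrr /=; apply: eq_bigr => S /eqP eqS.
transitivity (\sum_(f : {ffun 'I_r -> 'I_m} | injectiveb f && (f @: setT == S)) G S).
  by apply: eq_bigr => f /andP [_ /eqP ->].
rewrite sumr_const -(card_inj_im eqS) mulr_natl.
by congr (_ *+ _); apply: eq_card => f; rewrite !inE.
Qed.

Lemma det_mxsub_perm (R : comPzRingType) r m (P : 'M[R]_m) (f : 'I_r -> 'I_m) (s : 'S_r) :
  \det (mxsub (fun i => f (s i)) (fun i => f (s i)) P) = \det (mxsub f f P).
Proof.
have -> : mxsub (fun i => f (s i)) (fun i => f (s i)) P =
   row_perm s (col_perm s (mxsub f f P)) by apply/matrixP => i j; rewrite !mxE.
rewrite row_permE col_permE !det_mulmx !det_perm odd_permV.
by rewrite mulrCA -signr_addb addbb expr0 mulr1.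
Qed.

Lemma det_castmx (R : comPzRingType) n1 n2 (e : n1 = n2) (A : 'M[R]_n1) :
  \det (castmx (e, e) A) = \det A.
Proof. by case: n2 / e; rewrite castmx_id. Qed.

Lemma det_principal (R : realFieldType) r m (P : 'M[R]_m) (S : {set 'I_m})
  (eqS : #|S| = r) :
  \det (mxsub (fun i => enum_val (cast_ord (esym eqS) i))
              (fun i => enum_val (cast_ord (esym eqS) i)) P)
  = \det (principal_submx P S).
Proof.
rewrite -(det_castmx eqS); congr (\det _).
by apply/matrixP => i j; rewrite castmxE !mxE.
Qed.

Lemma det_inj_principal (R : realFieldType) r m (P : 'M[R]_m) (f : 'I_r -> 'I_m) :
  injective f -> \det (mxsub f f P) = \det (principal_submx P (f @: setT)).
Proof.
move=> finj.
have eqS : #|f @: setT| = r by rewrite card_imset // cardsT card_ord.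
have [s Hs] := inj_perm eqS finj erefl.
rewrite -(det_principal P eqS) -(det_mxsub_perm P (fun i => enum_val (cast_ord (esym eqS) i)) s).
by congr (\det _); apply/matrixP => i j; rewrite !mxE !Hs.
Qed.
Lemma cb1 (R : comPzRingType) r m (A : 'M[R]_(r, m)) (B : 'M[R]_(m, r)) :
  \det (A *m B) = \sum_(f : {ffun 'I_r -> 'I_m})
      (\prod_i A i (f i)) * \det (rowsub f B).
Proof.
rewrite /(\det _).
pose AB (s : 'S_r) i j := A i j * B j (s i).
transitivity (\sum_(s : 'S_r) \sum_(f : {ffun 'I_r -> 'I_m})
    (-1) ^+ s * \prod_i AB s i (f i)).
  apply: eq_bigr => s _; rewrite -big_distrr /=; congr (_ * _).
  rewrite -(bigA_distr_bigA (AB s)) /=.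
  by apply: eq_bigr => x _; rewrite mxE.
rewrite exchange_big /=; apply: eq_bigr => f _.
rewrite big_distrr /=; apply: eq_bigr => s _.
rewrite mulrCA big_split /=; congr (_ * (_ * _)).
by apply: eq_bigr => i _; rewrite mxE.
Qed.

Lemma det_rowsub_perm (R : comPzRingType) r m (f : 'I_r -> 'I_m) (s : 'S_r)
   (B : 'M[R]_(m, r)) :
  \det (rowsub (fun i => f (s i)) B) = (-1) ^+ s * \det (rowsub f B).
Proof.
have -> : rowsub (fun i => f (s i)) B = row_perm s (rowsub f B).
  by apply/matrixP => i j; rewrite !mxE.
by rewrite row_permE det_mulmx det_perm.
Qed.

Lemma cb2 (R : comPzRingType) r m (A : 'M[R]_(r, m)) (B : 'M[R]_(m, r)) :
  (r`!)%:R * \det (A *m B) = \sum_(f : {ffun 'I_r -> 'I_m})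
      \det (colsub f A) * \det (rowsub f B).
Proof.
rewrite cb1.
transitivity (\sum_(s : 'S_r) \sum_(f : {ffun 'I_r -> 'I_m})
   (-1) ^+ s * (\prod_i A i (f (s i))) * \det (rowsub f B)); last first.
  rewrite exchange_big /=; apply: eq_bigr => f _.
  rewrite /(\det (colsub f A)) big_distrl /=; apply: eq_bigr => s _.
  by congr (_ * _ * _); apply: eq_bigr => i _; rewrite mxE.
rewrite -card_Sn -sum1_card natr_sum big_distrl /=.
apply: eq_bigr => s _; rewrite mul1r.
have hinj : injective (fun g : {ffun 'I_r -> 'I_m} => [ffun j => g ((s^-1)%g j)]).
  move=> g1 g2 /ffunP H; apply/ffunP => j.
  by have := H (s j); rewrite !ffunE permK.
rewrite [RHS](reindex_inj hinj) /=; apply: eq_bigr => g _.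
have -> : (\prod_i A i ([ffun j => g ((s^-1)%g j)] (s i))) = \prod_i A i (g i).
  by apply: eq_bigr => i _; rewrite ffunE permK.
have -> : rowsub [ffun j => g ((s^-1)%g j)] B = rowsub (fun i => g ((s^-1)%g i)) B.
  by apply/matrixP => i j; rewrite !mxE ffunE.
rewrite det_rowsub_perm odd_permV.
by rewrite mulrCA !mulrA -signr_addb addbb expr0 mul1r.
Qed.
Lemma det_rank1 (R : comPzRingType) n (x : 'cV[R]_n) (y : 'rV[R]_n) :
  \det (1%:M + x *m y) = 1 + (y *m x) 0 0.
Proof.
pose M := block_mx (1%:M : 'M[R]_n) (- x) y (1%:M : 'M[R]_1).
have E1 : M = block_mx 1%:M 0 y 1%:M *m block_mx 1%:M (- x) 0 (1%:M + y *m x).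
  rewrite mulmx_block !mulmx0 !mul0mx !mulmx1 !mul1mx ?addr0 ?add0r.
  by rewrite /M mulmxN addrCA addNr addr0.
have E2 : M = block_mx (1%:M + x *m y) (- x) 0 1%:M *m block_mx 1%:M 0 y 1%:M.
  rewrite mulmx_block !mulmx0 !mul0mx !mulmx1 !mul1mx ?addr0 ?add0r.
  by rewrite mulNmx -addrA subrr addr0.
have := congr1 determinant E1; rewrite {1}E2 !det_mulmx ?det_lblock ?det_ublock.
rewrite !det1 !mul1r !mulr1 det_mx11 => ->.
by rewrite !mxE eqxx.
Qed.

Lemma marginal (R : realFieldType) m r (B : 'M[R]_(r, m)) (P : 'M[R]_m) (u : 'I_m) :
  P^T = P -> P *m P = P -> row_free B -> (B :=: P)%MS ->
  \sum_(S : {set 'I_m} | u \in S)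
     (if #|S| == r then \det (principal_submx P S) else 0) = P u u.
Proof.
move=> PT PP rfB eqBP.
set G := B *m B^T.
have Gunit : G \in unitmx.
  rewrite -row_free_unit; apply: inj_row_free => v vG0.
  have w0 : v *m B = 0.
    have : (v *m B *m (v *m B)^T) 0 0 = 0.
      by rewrite trmx_mul mulmxA -(mulmxA v) vG0 mul0mx mxE.
    rewrite mxE => H.
    apply/matrixP => i j; rewrite ord1 [RHS]mxE.
    have Hge : forall k : 'I_m, true -> 0 <= (v *m B) 0 k * (v *m B)^T k 0.
      by move=> k _; rewrite [_^T _ _]mxE -expr2 sqr_ge0.
    have := psumr_eq0P Hge H. move=> HH. have /eqP := HH j isT.
    by rewrite [_^T _ _]mxE mulf_eq0 orbb => /eqP.
  by apply: (row_free_inj rfB); rewrite w0 mul0mx.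
have sBP : (B <= P)%MS by rewrite eqBP submx_refl.
have sPB : (P <= B)%MS by rewrite -eqBP submx_refl.
have BP : B *m P = B.
  by case/submxP: sBP => X ->; rewrite -mulmxA PP.
have PE : P = B^T *m invmx G *m B.
  case/submxP: sPB => Y PY.
  have PY' : P = B^T *m Y^T by rewrite -PT PY trmx_mul.
  have GY : G *m Y^T = B by rewrite /G -mulmxA -PY' BP.
  by rewrite {1}PY' -mulmxA; congr (_ *m _); rewrite -[in RHS]GY mulKmx.
have trsub (C : 'M[R]_(r, m)) (f : {ffun 'I_r -> 'I_m}) :
    rowsub f C^T = (colsub f C)^T by apply/matrixP => i j; rewrite !mxE.
have detsub (f : {ffun 'I_r -> 'I_m}) :
    \det (mxsub f f P) = \det (colsub f B) ^+ 2 / \det G.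
  rewrite PE mxsub_mul -mul_rowsub_mx !det_mulmx det_inv trsub det_tr.
  by rewrite mulrAC -expr2.
have cbG : (r`!)%:R * \det G = \sum_(f : {ffun 'I_r -> 'I_m}) \det (colsub f B) ^+ 2.
  by rewrite /G cb2; apply: eq_bigr => f _; rewrite trsub det_tr expr2.
pose B' := \matrix_(i, j) (if j == u then 0 else B i j) : 'M[R]_(r, m).
pose b := col u B.
have B'E : B' *m B'^T = G - b *m b^T.
  apply/matrixP => i k; rewrite !mxE (bigD1 u) //= [in X in _ = X - _](bigD1 u) //=.
  rewrite big_ord1 !mxE eqxx mul0r add0r addrAC subrr add0r.
  by apply: eq_bigr => j /negPf nj; rewrite !mxE nj.
have cbG' : (r`!)%:R * \det (B' *m B'^T) = \sum_(f : {ffun 'I_r -> 'I_m})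
    (if u \in f @: setT then 0 else \det (colsub f B) ^+ 2).
  rewrite cb2; apply: eq_bigr => f _; rewrite trsub det_tr -expr2.
  case: ifP => [/imsetP [j0 _ uf]|/negbT nu].
    rewrite (expand_det_col _ j0) big1 ?expr0n // => i _.
    by rewrite !mxE -uf eqxx mul0r.
  congr (_ ^+ 2); congr (\det _); apply/matrixP => i j; rewrite !mxE.
  case: eqP => // fu; case/negP: nu; rewrite -fu; apply: imset_f; exact: in_setT.
have Puu : P u u = (b^T *m invmx G *m b) 0 0.
  rewrite {1}PE !mxE; apply: eq_bigr => l _; rewrite !mxE; congr (_ * _).
  by apply: eq_bigr => k _; rewrite !mxE.
have detG' : \det (B' *m B'^T) = \det G * (1 - P u u).
  rewrite B'E.
  have -> : G - b *m b^T = G *m (1%:M + (- (invmx G *m b)) *m b^T).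
    by rewrite mulmxDr mulmx1 mulNmx mulmxN !mulmxA mulmxV // mul1mx.
  rewrite det_mulmx det_rank1 Puu mulmxN mxE.
  by rewrite mulmxA.
have r0 : (r`!)%:R != 0 :> R by rewrite pnatr_eq0 -lt0n fact_gt0.
have dG0 : \det G != 0 by rewrite -unitfE -unitmxE.
pose F (f : {ffun 'I_r -> 'I_m}) :=
  if u \in f @: setT then \det (mxsub f f P) else 0.
pose GS (S : {set 'I_m}) := if u \in S then \det (principal_submx P S) else 0.
have key := @sum_funs_sets R r m F GS.
have F0 : forall f : {ffun 'I_r -> 'I_m}, ~~ injectiveb f -> F f = 0.
  move=> f /injectivePn [i1 [i2 ni12 fi12]]; rewrite /F; case: ifP => // _.
  by apply: (determinant_alternate ni12) => j; rewrite !mxE fi12.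
have FG : forall f : {ffun 'I_r -> 'I_m}, injectiveb f -> F f = GS (f @: setT).
  by move=> f /injectiveP finj; rewrite /F /GS det_inj_principal.
have {key}key := key F0 FG.
apply: (mulfI r0).
have -> : \sum_(S : {set 'I_m} | u \in S)
     (if #|S| == r then \det (principal_submx P S) else 0)
   = \sum_(S : {set 'I_m} | #|S| == r) GS S.
  rewrite big_mkcond [RHS]big_mkcond /=; apply: eq_bigr => S _.
  by rewrite /GS; case: (u \in S); case: (#|S| == r).
rewrite -key.
have -> : \sum_f F f = (\sum_(f : {ffun 'I_r -> 'I_m}) \det (colsub f B) ^+ 2
     - \sum_(f : {ffun 'I_r -> 'I_m})
         (if u \in f @: setT then 0 else \det (colsub f B) ^+ 2)) / \det G.
  rewrite -sumrB mulr_suml; apply: eq_bigr => f _; rewrite /F detsub.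
  by case: ifP => _; rewrite ?subrr ?mul0r ?subr0.
rewrite -cbG -cbG' detG'.
by field.
Qed.

Lemma cs_ineq (R : realFieldType) m (x y : 'rV[R]_m) :
  dotv x y ^+ 2 <= dotv x x * dotv y y.
Proof.
have expand (p q : R) : \sum_(t < m) (p * x 0 t - q * y 0 t) ^+ 2 =
    p ^+ 2 * dotv x x - 2 * p * q * dotv x y + q ^+ 2 * dotv y y.
  rewrite /dotv !mulr_sumr -sumrB -big_split /=; apply: eq_bigr => t _; ring.
have ge0 (p q : R) : 0 <= p ^+ 2 * dotv x x - 2 * p * q * dotv x y + q ^+ 2 * dotv y y.
  by rewrite -expand sumr_ge0 // => t _; rewrite sqr_ge0.
have cge0 : 0 <= dotv y y by rewrite /dotv sumr_ge0 // => t _; rewrite -expr2 sqr_ge0.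
have [c0|cpos] := eqVneq (dotv y y) 0.
  have y0 t : y 0 t = 0.
    have Hge : forall k : 'I_m, true -> 0 <= y 0 k * y 0 k.
      by move=> k _; rewrite -expr2 sqr_ge0.
    have := psumr_eq0P Hge c0. move=> HH. have /eqP := HH t isT.
    by rewrite mulf_eq0 orbb => /eqP.
  have -> : dotv x y = 0 by rewrite /dotv big1 // => t _; rewrite y0 mulr0.
  by rewrite c0 mulr0 expr0n.
have cp : 0 < dotv y y by rewrite lt_def cpos cge0.
have := ge0 (dotv y y) (dotv x y).
set a := dotv x x; set b := dotv x y; set c := dotv y y.
have -> : c ^+ 2 * a - 2 * c * b * b + b ^+ 2 * c = c * (a * c - b ^+ 2) by ring.
by rewrite pmulr_rge0 // subr_ge0.
Qed.

Lemma dotv_sum (R : realFieldType) m k (c : 'I_k -> R) (x : 'I_k -> 'rV[R]_m) :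
  dotv (\sum_i c i *: x i) (\sum_i c i *: x i) =
  \sum_i \sum_j c i * c j * dotv (x i) (x j).
Proof.
rewrite /dotv.
transitivity (\sum_(t < m) \sum_i \sum_j c i * c j * (x i 0 t * x j 0 t)).
  apply: eq_bigr => t _; rewrite !summxE big_distrl /=; apply: eq_bigr => i _.
  rewrite big_distrr /=; apply: eq_bigr => j _; rewrite !mxE; ring.
rewrite exchange_big /=; apply: eq_bigr => i _.
rewrite exchange_big /=; apply: eq_bigr => j _.
by rewrite big_distrr.
Qed.

Unset Implicit Arguments.
Set Strict Implicit.

Theorem corollary2p13 (R : realFieldType) (m : nat) (W P : 'M[R]_m)
  (u : 'I_m) (k : nat) (gamma : R) (xi : 'I_k -> 'rV[R]_m) :
  is_orth_proj W P ->
  (0 < k)%N ->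
  0 < gamma -> gamma < 1 / k%:R ->
  (forall i, (xi i <= W)%MS) ->
  (forall i, `|xi i 0 u| = 1) ->
  (forall i j, i != j ->
     `|dotv (xi i) (xi j)| <= gamma * Num.min (sqnorm (xi i)) (sqnorm (xi j))) ->
  detprob_mem W P u >=
    (1 - gamma * k%:R / (1 - gamma * k%:R)) * \sum_(i < k) 1 / sqnorm (xi i).
Proof.
move=> [PT PP PW] k0 g0 gk xiW xiu xid.
have eqr : \rank P = \rank W by apply: eqmx_rank.
have mprob : detprob_mem W P u = P u u.
  pose B := castmx (eqr, erefl m) (row_base P).
  rewrite /detprob_mem /detmeasure.
  apply: (@marginal R m (\rank W) B P u PT PP).
    by rewrite /B row_free_castmx row_base_free.
  exact: eqmx_trans (eqmx_cast _ _) (eq_row_base P).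
rewrite mprob.
case/andP: PW => _ sWP.
have xiP i : xi i *m P = xi i.
  by have /submxP [X ->] := submx_trans (xiW i) sWP; rewrite -mulmxA PP.
pose n i := sqnorm (xi i).
have xu2 i : xi i 0 u ^+ 2 = 1 by apply/eqP; rewrite sqr_norm_eq1 xiu.
have npos i : 0 < n i.
  rewrite /n /sqnorm /dotv (bigD1 u) //= -expr2 xu2.
  have : 0 <= \sum_(t < m | t != u) xi i 0 t * xi i 0 t.
    by rewrite sumr_ge0 // => t _; rewrite -expr2 sqr_ge0.
  lra.
pose A := \sum_i 1 / n i.
pose c i := xi i 0 u / n i.
pose v := \sum_i c i *: xi i.
have vu : v 0 u = A.
  rewrite /v summxE; apply: eq_bigr => i _; rewrite mxE /c mulrAC -expr2 xu2.
  by rewrite mul1r.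
have vP : v *m P = v.
  by rewrite /v mulmx_suml; apply: eq_bigr => i _; rewrite -scalemxAl xiP.
have cabs i : `|c i| = 1 / n i.
  by rewrite /c normrM normfV xiu gtr0_norm // mul1r div1r.
have term i j : c i * c j * dotv (xi i) (xi j) <=
    (if j == i then 1 / n i else 0) + gamma / n i.
  have gn : 0 <= gamma / n i by rewrite divr_ge0 // ?ltW // npos.
  case: eqVneq => [->|nij].
    have -> : c i * c i * dotv (xi i) (xi i) = 1 / n i.
      rewrite /c -/(sqnorm (xi i)) -/(n i).
      have := npos i; move: (xu2 i); set a := xi i 0 u; set b := n i => ha hb.
      rewrite -ha; field; exact/lt0r_neq0.
    by rewrite lerDl.
  rewrite add0r.
  apply: le_trans (ler_norm _) _.
  rewrite (normrM (c i * c j)) (normrM (c i)) !cabs.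
  rewrite eq_sym in nij; have hd := xid i j nij.
  have hmin : Num.min (sqnorm (xi i)) (sqnorm (xi j)) <= n j by rewrite ge_min lexx orbT.
  have := npos i; have := npos j.
  set a := n i; set b := n j; set d := `|dotv (xi i) (xi j)|.
  move=> bp ap.
  have hd2 : d <= gamma * b by apply: le_trans hd _; rewrite ler_pM2l.
  apply: le_trans (_ : _ <= 1 / a * (1 / b) * (gamma * b)) _.
    by rewrite ler_wpM2l // mulr_ge0 // divr_ge0 // ltW.
  have -> : 1 / a * (1 / b) * (gamma * b) = gamma / a.
    by field; apply/andP; split; apply: lt0r_neq0.
  by [].
have vn : sqnorm v <= (1 + gamma * k%:R) * A.
  rewrite /sqnorm /v dotv_sum.
  apply: le_trans (_ : _ <= \sum_i \sum_(j < k)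
     ((if j == i then 1 / n i else 0) + gamma / n i)) _.
    by apply: ler_sum => i _; apply: ler_sum => j _; apply: term.
  rewrite /A mulr_sumr; apply: ler_sum => i _.
  rewrite big_split /= -big_mkcond /= big_pred1_eq sumr_const card_ord.
  rewrite -[_ *+ k]mulr_natl.
  have -> : 1 / n i + k%:R * (gamma / n i) = (1 + gamma * k%:R) * (1 / n i).
    by field; apply: lt0r_neq0.
  by [].
have csv := cs_ineq v (row u P).
have dvy : dotv v (row u P) = v 0 u.
  rewrite -{2}vP /dotv mxE; apply: eq_bigr => t _.
  by rewrite !mxE -{1}PT mxE.
have dyy : dotv (row u P) (row u P) = P u u.
  rewrite -{3}PP /dotv mxE; apply: eq_bigr => t _.
  by rewrite !mxE -{2}PT mxE.
rewrite dvy dyy vu in csv.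
have Puu0 : 0 <= P u u.
  by rewrite -dyy /dotv sumr_ge0 // => t _; rewrite -expr2 sqr_ge0.
have Apos : 0 < A.
  rewrite /A (bigD1 (Ordinal k0)) //=.
  have h1 : 0 <= \sum_(i < k | i != Ordinal k0) 1 / n i.
    by rewrite sumr_ge0 // => i _; rewrite divr_ge0 // ltW.
  have h3 : 0 < 1 / n (Ordinal k0) by rewrite divr_gt0.
  lra.
have xk : gamma * k%:R < 1.
  have kp : 0 < k%:R :> R by rewrite ltr0n.
  have := gk; rewrite -(ltr_pM2r kp) mulrC.
  by rewrite div1r mulVf // lt0r_neq0.
have xk0 : 0 < gamma * k%:R by rewrite mulr_gt0 // ltr0n.
have hA : A <= (1 + gamma * k%:R) * P u u.
  have h1 : A ^+ 2 <= (1 + gamma * k%:R) * A * P u u.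
    by apply: le_trans csv _; rewrite ler_wpM2r.
  nra.
rewrite -/(n _).
have -> : \sum_(i < k) 1 / n i = A by [].
set x := gamma * k%:R in xk xk0 hA *.
set z := x / (1 - x).
have hz : z * (1 - x) = x by rewrite /z; field; rewrite subr_eq0 gt_eqF.
have z0 : 0 <= z by apply: divr_ge0; [exact: ltW | rewrite subr_ge0; exact: ltW].
have [h|h] := lerP 0 (1 - z).
  have h2 : (1 - z) * A <= (1 - z) * ((1 + x) * P u u) by rewrite ler_wpM2l.
  have h3 : 0 <= z * x * P u u by apply: mulr_ge0 => //; apply: mulr_ge0 => //; exact: ltW.
  have h4 : z * (1 - x) * P u u = x * P u u by rewrite hz.
  nra.
have : (1 - z) * A < 0 by rewrite pmulr_llt0.
lra.
Qed.
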